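(* Let $A=K[X_1,\ldots,X_n]$ over a field $K$, let $d$ be a positive integer, let $W$ be a $K$-vector subspace of $A_d$, and let $\omega=(\omega_1,\ldots,\omega_n)\in\mathbb Z^n$ be a weight with $\omega_1\geq\cdots\geq\omega_n\geq 0$. Then for every integer $0\leq a\leq\omega_1 d$, the dimension of the homogeneous component of weight $a$ of $\operatorname{in}_\omega(W)$ equals $\operatorname{rk}^{S_a}W-\operatorname{rk}^{S_{a+1}}W$. Furthermore, if $W$ is homogeneous with respect to $\omega$ and $b\in\mathcal B$, then $\alpha_\omega(bW)\geq\alpha_\omega(W)$ (componentwise).
   Context: $A_d$ is the space of homogeneous polynomials of degree $d$. The weight of a monomial $\mathbf X^{\mathbf a}$ is $\omega\cdot\mathbf a$. For $0\leq a\leq\omega_1d+1$, $S_a$ is the set of monomials in $A_d$ of weight strictly less than $a$. For a finite set $S$ of monomials and a subspace $W$, $\operatorname{rk}^S W=\dim_K (W+\langle S\rangle)/\langle S\rangle$, where $\langle S\rangle$ is the $K$-span of $S$. Define $\alpha_\omega(W)=(\operatorname{rk}^{S_{\omega_1 d}}W,\operatorname{rk}^{S_{\omega_1 d-1}}W,\ldots,\operatorname{rk}^{S_1}W)$. The initial form $\operatorname{in}_\omega(f)$ is the sum of the terms of $f$ of maximal weight, and $\operatorname{in}_\omega(W)$ is the $K$-span of $\{\operatorname{in}_\omega(f): f\in W\}$; its homogeneous component of weight $a$ is its intersection with the span of monomials of weight $a$. $W$ is homogeneous with respect to $\omega$ if it is spanned by polynomials all of whose monomials have the same weight. $\mathcal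 B$ is the group of invertible upper-triangular $n\times n$ matrices over $K$; a matrix $b=(b_{ij})$ acts on $A$ as the linear change of coordinates $X_j\mapsto\sum_{i=1}^n b_{ij}X_i$ (so for $b\in\mathcal B$, $X_j\mapsto \sum_{i\le j}b_{ij}X_i$), and $bW$ is the image of $W$. *)

(* Defs.v *)
From HB Require Import structures.
From mathcomp Require Import all_boot all_order all_algebra.
From mathcomp.multinomials Require Import mpoly.
From Stdlib Require Import ClassicalEpsilon.
Set Implicit Arguments.
Unset Strict Implicit.
Unset Printing Implicit Defensive.
Import Order.TTheory GRing.Theory Num.Theory.
Local Open Scope ring_scope.

Section Lin.
Variables (K : fieldType) (V : lmodType K).

Definition inspan (s : seq V) (v : V) : Prop :=
  exists c : 'I_(size s) -> K, v = \sum_(i < size s) c i *: s`_i.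

(* [quotdim_is P Q k] : P, Q subspaces of V; dim_K (P + Q)/Q = k, i.e.
   there are k elements of P whose images in (P + Q)/Q form a basis:
   they are linearly independent modulo Q, and every element of P
   (hence every element of P + Q) is congruent modulo Q to a linear
   combination of them. *)
Definition quotdim_is (P Q : V -> Prop) (k : nat) : Prop :=
  exists t : 'I_k -> V,
    [/\ forall i, P (t i),
        forall c : 'I_k -> K, Q (\sum_(i < k) c i *: t i) -> forall i, c i = 0
      & forall v, P v -> exists c : 'I_k -> K, Q (v - \sum_(i < k) c i *: t i)].

(* dim_K (P + Q)/Q  (the chosen value when it exists; all spaces below are
   finite-dimensional) *)
Definition quotdim (P Q : V -> Prop) : nat :=
  epsilon (inhabits 0%N) (quotdim_is P Q).

Definition dimK (P : V -> Prop) : nat := quotdim P (fun v => v = 0).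

Definition is_subspace (P : V -> Prop) : Prop :=
  [/\ P 0, forall u v, P u -> P v -> P (u + v)
    & forall (c : K) v, P v -> P (c *: v)].

End Lin.

Section Poly.
Variables (n : nat) (K : fieldType).
Local Notation A := {mpoly K[n]}.

Definition in_Ad (d : nat) (p : A) : Prop :=
  forall m, m \in msupp p -> mdeg m = d.

Definition mweight (w : 'I_n -> int) (m : 'X_{1..n}) : int :=
  \sum_(i < n) w i * (m i)%:Z.

(* K-span of a (possibly infinite) set M of monomials: the polynomials
   all of whose monomials lie in M *)
Definition monspan (M : 'X_{1..n} -> Prop) (p : A) : Prop :=
  forall m, m \in msupp p -> M m.

(* <S_a> : span of the monomials of A_d of weight strictly less than a *)
Definition span_S (w : 'I_n -> int) (d : nat) (a : int) : A -> Prop :=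
  monspan (fun m => mdeg m = d /\ mweight w m < a).

Definition rkS (w : 'I_n -> int) (d : nat) (a : int) (W : A -> Prop) : nat :=
  quotdim W (span_S w d a).

Definition init_form (w : 'I_n -> int) (f : A) : A :=
  \sum_(m <- msupp f | all (fun m' => mweight w m' <= mweight w m) (msupp f))
     f@_m *: 'X_[m].

Definition init_space (w : 'I_n -> int) (W : A -> Prop) (v : A) : Prop :=
  exists s : seq A,
    (forall g, g \in s -> exists f, W f /\ g = init_form w f) /\ inspan s v.

Definition weight_comp (w : 'I_n -> int) (a : int) (U : A -> Prop) (v : A) : Prop :=
  U v /\ monspan (fun m => mweight w m = a) v.

Definition w_homog_poly (w : 'I_n -> int) (f : A) : Prop :=
  forall m m', m \in msupp f -> m' \in msupp f -> mweight w m = mweight w m'.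

(* W is homogeneous w.r.t. w : spanned by w-homogeneous polynomials
   (which may be taken in W) *)
Definition w_homog_space (w : 'I_n -> int) (W : A -> Prop) : Prop :=
  forall v, W v -> exists s : seq A,
    (forall g, g \in s -> W g /\ w_homog_poly w g) /\ inspan s v.

Definition bact (b : 'M[K]_n) (p : A) : A :=
  p \mPo [tuple \sum_(i < n) b i j *: 'X_i | j < n].

Definition bimage (b : 'M[K]_n) (W : A -> Prop) (q : A) : Prop :=
  exists p, W p /\ q = bact b p.

Definition borel (b : 'M[K]_n) : Prop :=
  b \in unitmx /\ (forall i j : 'I_n, (j < i)%N -> b i j = 0).

End Poly.

(* Main.v *)
Require Import Defs.
From HB Require Import structures.
From mathcomp Require Import all_boot all_order all_algebra.
From mathcomp.multinomials Require Import mpoly.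
From Stdlib Require Import ClassicalEpsilon Classical.
Import Order.TTheory GRing.Theory Num.Theory.
Local Open Scope ring_scope.
Set Implicit Arguments.
Unset Strict Implicit.
Section LinAlg.
Variables (K : fieldType) (V : lmodType K).
Variable Q : V -> Prop.
Hypothesis hQ : is_subspace Q.

Lemma subQ0 : Q 0. Proof. by case: hQ. Qed.
Lemma subQD u v : Q u -> Q v -> Q (u + v). Proof. by case: hQ => _ h _; apply: h. Qed.
Lemma subQZ c v : Q v -> Q (c *: v). Proof. by case: hQ => _ _ h; apply: h. Qed.
Lemma subQN v : Q v -> Q (- v). Proof. by move=> h; rewrite -scaleN1r; apply: subQZ. Qed.
Lemma subQB u v : Q u -> Q v -> Q (u - v). Proof. by move=> h1 h2; apply: subQD => //; apply: subQN. Qed.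
Lemma subQ_sum (I : Type) (r : seq I) (P : pred I) (F : I -> V) :
  (forall i, P i -> Q (F i)) -> Q (\sum_(i <- r | P i) F i).
Proof. by move=> h; apply: big_ind => //; [apply: subQ0 | apply: subQD]. Qed.
Lemma subQ_lin k (c : 'I_k -> K) (t : 'I_k -> V) :
  (forall i, Q (t i)) -> Q (\sum_i c i *: t i).
Proof. by move=> h; apply: subQ_sum => i _; apply: subQZ. Qed.

Lemma indep_le k m (t : 'I_k -> V) (u : 'I_m -> V) (M : 'M[K]_(k, m)) :
  (forall i, Q (t i - \sum_j M i j *: u j)) ->
  (forall c : 'I_k -> K, Q (\sum_i c i *: t i) -> forall i, c i = 0) ->
  (k <= m)%N.
Proof.
move=> hM hind; case: (leqP k m) => // hmk; exfalso.
set r := nz_row (kermx M).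
have rnz : r != 0.
  rewrite nz_row_eq0 -mxrank_eq0 mxrank_ker subn_eq0 -ltnNge.
  exact: leq_ltn_trans (rank_leq_col M) hmk.
have rM : r *m M = 0 by apply/sub_kermxP; apply: nz_row_sub.
have : Q (\sum_i r 0 i *: t i).
  have -> : \sum_i r 0 i *: t i =
     \sum_i r 0 i *: (t i - \sum_j M i j *: u j) +
     \sum_j (\sum_i r 0 i * M i j) *: u j.
    have e : \sum_i r 0 i *: (\sum_j M i j *: u j) =
             \sum_j (\sum_i r 0 i * M i j) *: u j.
      rewrite (eq_bigr (fun i => \sum_j (r 0 i * M i j) *: u j)); last first.
        by move=> i _; rewrite scaler_sumr; apply: eq_bigr => j _; rewrite scalerA.
      rewrite exchange_big /=; apply: eq_bigr => j _; by rewrite scaler_suml.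
    rewrite -e -big_split /=; apply: eq_bigr => i _; by rewrite scalerBr subrK.
  apply: subQD; first by apply: subQ_lin.
  apply: subQ_sum => j _.
  have -> : \sum_i r 0 i * M i j = (r *m M) 0 j by rewrite mxE.
  by rewrite rM mxE scale0r; apply: subQ0.
move/hind => h; move/negP: rnz; apply; apply/eqP/rowP => i.
by rewrite mxE h.
Qed.

Definition indepQ k (t : 'I_k -> V) :=
  forall c : 'I_k -> K, Q (\sum_i c i *: t i) -> forall i, c i = 0.

Lemma quotdim_is_le (P : V -> Prop) k k' :
  quotdim_is P Q k -> quotdim_is P Q k' -> (k <= k')%N.
Proof.
case=> t [tP tind _] [t' [_ _ t'sp]].
have : forall i, exists c : 'I_k' -> K, Q (t i - \sum_j c j *: t' j).
  by move=> i; apply: t'sp.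
case/fin_all_exists => C hC.
apply: (@indep_le _ _ t t' (\matrix_(i, j) C i j)) => // i.
by under eq_bigr do rewrite mxE.
Qed.

Lemma quotdim_is_uniq (P : V -> Prop) k k' :
  quotdim_is P Q k -> quotdim_is P Q k' -> k = k'.
Proof. by move=> h1 h2; apply/eqP; rewrite eqn_leq !(quotdim_is_le h1 h2, quotdim_is_le h2 h1). Qed.

Lemma quotdim_eq (P : V -> Prop) k : quotdim_is P Q k -> quotdim P Q = k.
Proof.
move=> h; apply: (quotdim_is_uniq _ h).
by apply: epsilon_spec; exists k.
Qed.

Definition ext k (t : 'I_k -> V) (v : V) (i : 'I_k.+1) : V :=
  if unlift ord_max i is Some j then t j else v.

Lemma sum_ext k (c : 'I_k.+1 -> K) (t : 'I_k -> V) v :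
  \sum_i c i *: ext t v i =
  \sum_(i < k) c (lift ord_max i) *: t i + c ord_max *: v.
Proof.
rewrite big_ord_recr /= /ext unlift_none; congr (_ + _).
apply: eq_bigr => i _.
have -> : widen_ord (leqnSn k) i = lift ord_max i by apply: val_inj; exact: (esym (lift_max i)).
by rewrite liftK.
Qed.

Lemma indep_ext k (t : 'I_k -> V) v :
  indepQ t -> ~ (exists c : 'I_k -> K, Q (v - \sum_i c i *: t i)) ->
  indepQ (ext t v).
Proof.
move=> ht hv c; rewrite sum_ext => hq.
have cm0 : c ord_max = 0.
  apply/eqP; apply/negPn/negP => cnz; apply: hv.
  exists (fun i => - (c (lift ord_max i) / c ord_max)).
  have -> : v - \sum_i - (c (lift ord_max i) / c ord_max) *: t i =
     (c ord_max)^-1 *: (\sum_i c (lift ord_max i) *: t i + c ord_max *: v).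
    rewrite scalerDr scalerA mulVf // scale1r addrC; congr (_ + _).
    rewrite scaler_sumr -sumrN; apply: eq_bigr => i _.
    by rewrite scaleNr opprK scalerA mulrC.
  exact: subQZ.
move: hq; rewrite cm0 scale0r addr0 => /ht h i.
by case: (unliftP ord_max i) => [j ->|->].
Qed.

Lemma quotdim_exists (P : V -> Prop) (s : seq V) :
  (forall v, P v -> inspan s v) -> exists k, quotdim_is P Q k.
Proof.
move=> hs.
have bound : forall k (t : 'I_k -> V), (forall i, P (t i)) -> indepQ t ->
    (k <= size s)%N.
  move=> k t tP ti.
  have : forall i, exists c : 'I_(size s) -> K, t i = \sum_j c j *: s`_j.
    by move=> i; apply: hs.
  case/fin_all_exists => C hC.
  apply: (@indep_le _ _ t (fun j => s`_j) (\matrix_(i, j) C i j)) => // i.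
  under eq_bigr do rewrite mxE.
  by rewrite -hC subrr; apply: subQ0.
suff : forall r k (t : 'I_k -> V), (forall i, P (t i)) -> indepQ t ->
    (size s - k <= r)%N -> exists k, quotdim_is P Q k.
  move=> /(_ (size s) 0%N (fun i => match i with Ordinal _ h => False_rect _ (notF h) end)).
  apply; by [case=> [] | move=> c _ [] | rewrite subn0].
elim=> [|r IH] k t tP ti hr.
- case: (classic (forall v, P v -> exists c : 'I_k -> K, Q (v - \sum_i c i *: t i))) => hsp.
    by exists k; exists t; split.
  have [v hv] := not_all_ex_not _ _ hsp.
  have [Pv nv] := imply_to_and _ _ hv.
  have H : forall i, P (ext t v i) by move=> i; rewrite /ext; case: (unlift _ _).
  have h := bound _ (ext t v) H (indep_ext ti nv).
  rewrite leqn0 subn_eq0 in hr.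
  by have := leq_ltn_trans hr h; rewrite ltnn.
- case: (classic (forall v, P v -> exists c : 'I_k -> K, Q (v - \sum_i c i *: t i))) => hsp.
    by exists k; exists t; split.
  have [v hv] := not_all_ex_not _ _ hsp.
  have [Pv nv] := imply_to_and _ _ hv.
  apply: (IH _ (ext t v)); last first.
    by rewrite subnS; case: (size s - k)%N hr.
  - exact: indep_ext.
  by move=> i; rewrite /ext; case: (unlift _ _).
Qed.
End LinAlg.

Section PolyFacts.
Variables (N : nat) (K : fieldType).
Local Notation A := {mpoly K[N]}.
Implicit Types (p q : A).

Lemma sum_delta (s : seq 'X_{1..N}) (P : pred 'X_{1..N}) (F : 'X_{1..N} -> K) m0 :
  uniq s -> \sum_(m <- s | P m) F m * (m == m0)%:R = ((m0 \in s) && P m0)%:R * F m0.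
Proof.
elim: s => [|x s IH] /=; first by rewrite big_nil mul0r.
case/andP=> xs us; rewrite big_cons IH // in_cons.
case: (eqVneq x m0) => [<-|ne] /=.
  rewrite (negbTE xs) /=.
  by case: (P x); rewrite ?mulr1 ?mul0r ?addr0 ?mul1r.
by case: (P x); rewrite ?mulr0 ?add0r.
Qed.

Definition wfilter (P : pred 'X_{1..N}) p : A :=
  \sum_(m <- msupp p | P m) p@_m *: 'X_[m].

Lemma wfilterE P p m0 : (wfilter P p)@_m0 = if P m0 then p@_m0 else 0.
Proof.
rewrite /wfilter raddf_sum /=.
under eq_bigr do rewrite mcoeffZ mcoeffX.
rewrite sum_delta ?msupp_uniq //.
case: (boolP (m0 \in msupp p)) => h /=.
  by case: (P m0); rewrite ?mul1r ?mul0r.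
by rewrite mul0r (memN_msupp_eq0 h); case: (P m0).
Qed.

Lemma wfilterD P p q : wfilter P (p + q) = wfilter P p + wfilter P q.
Proof. by apply/mpolyP => m; rewrite mcoeffD !wfilterE mcoeffD; case: (P m); rewrite ?addr0. Qed.
Lemma wfilterZ P c p : wfilter P (c *: p) = c *: wfilter P p.
Proof. by apply/mpolyP => m; rewrite mcoeffZ !wfilterE mcoeffZ; case: (P m); rewrite ?mulr0. Qed.
Lemma wfilterB P p q : wfilter P (p - q) = wfilter P p - wfilter P q.
Proof. by apply/mpolyP => m; rewrite mcoeffB !wfilterE mcoeffB; case: (P m); rewrite ?subr0. Qed.
Lemma wfilter0 P : wfilter P 0 = 0.
Proof. by apply/mpolyP => m; rewrite wfilterE mcoeff0; case: (P m). Qed.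
Lemma wfilter_sum P (I : Type) (r : seq I) (Pi : pred I) (F : I -> A) :
  wfilter P (\sum_(i <- r | Pi i) F i) = \sum_(i <- r | Pi i) wfilter P (F i).
Proof. exact: (big_morph _ (@wfilterD P) (wfilter0 P)). Qed.

Lemma monspanE (M : 'X_{1..N} -> Prop) p :
  monspan M p <-> (forall m, p@_m != 0 -> M m).
Proof. by split=> h m; [rewrite -mcoeff_msupp; apply: h | rewrite mcoeff_msupp; apply: h]. Qed.

Lemma monspan_sub (M : 'X_{1..N} -> Prop) : is_subspace (@monspan N K M).
Proof.
split.
- by move=> m; rewrite msupp0.
- move=> u v hu hv m /msuppD_le; rewrite mem_cat => /orP [] h; [exact: hu | exact: hv].
- by move=> c v hv m /msuppZ_le; apply: hv.
Qed.

Definition Gge (u : 'I_N -> int) (a : int) p := forall m, m \in msupp p -> a <= Defs.mweight u m.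

Lemma mweightD (u : 'I_N -> int) (m1 m2 : 'X_{1..N}) : Defs.mweight u (m1 + m2)%MM = Defs.mweight u m1 + Defs.mweight u m2.
Proof. by rewrite /Defs.mweight -big_split; apply: eq_bigr => i _; rewrite mnmDE PoszD mulrDr. Qed.
Lemma mweight0 (u : 'I_N -> int) : Defs.mweight u 0%MM = 0.
Proof. by rewrite /Defs.mweight big1 // => i _; rewrite mnm0E mulr0. Qed.

Lemma Gge0 u a : Gge u a 0.
Proof. by move=> m; rewrite msupp0. Qed.
Lemma GgeD u a p q : Gge u a p -> Gge u a q -> Gge u a (p + q).
Proof. by move=> hp hq m /msuppD_le; rewrite mem_cat => /orP [] h; [exact: hp | exact: hq]. Qed.
Lemma GgeZ u a c p : Gge u a p -> Gge u a (c *: p).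
Proof. by move=> hp m /msuppZ_le; apply: hp. Qed.
Lemma Gge_sum u a (I : Type) (r : seq I) (P : pred I) (F : I -> A) :
  (forall i, P i -> Gge u a (F i)) -> Gge u a (\sum_(i <- r | P i) F i).
Proof. by move=> h; apply: big_ind => //; [apply: Gge0 | apply: GgeD]. Qed.
Lemma Gge_le u a b p : b <= a -> Gge u a p -> Gge u b p.
Proof. by move=> ba hp m /hp; apply: le_trans. Qed.
Lemma GgeM u a b p q : Gge u a p -> Gge u b q -> Gge u (a + b) (p * q).
Proof.
move=> hp hq m /msuppM_le /allpairsP [[m1 m2] /= [h1 h2 ->]].
by rewrite mweightD lerD ?hp ?hq.
Qed.
Lemma Gge1 u : Gge u 0 1.
Proof. by move=> m; rewrite -mpolyX0 msuppX mem_seq1 => /eqP ->; rewrite mweight0. Qed.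
Lemma GgeX u a p k : Gge u a p -> Gge u (a * k%:Z) (p ^+ k).
Proof.
move=> hp; elim: k => [|k IH]; first by rewrite mulr0 expr0; apply: Gge1.
by rewrite exprS -addn1 PoszD mulrDr mulr1 addrC; apply: GgeM.
Qed.
Lemma GgeXm u m : Gge u (Defs.mweight u m) 'X_[m].
Proof. by move=> m'; rewrite msuppX mem_seq1 => /eqP ->. Qed.

End PolyFacts.

Section Comp.
Variables (N : nat) (K : fieldType).
Local Notation A := {mpoly K[N]}.

Lemma Gge_comp (u v : 'I_N -> int) (a : int) (p : A) (lq : N.-tuple A) :
  (forall m, m \in msupp p -> a <= Defs.mweight v m) ->
  (forall j, Gge u (v j) (tnth lq j)) -> Gge u a (p \mPo lq).
Proof.
move=> hp hq; rewrite comp_mpolyE big_seq; apply: Gge_sum => m /hp hm; apply: GgeZ.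
apply: (Gge_le hm); rewrite /Defs.mweight.
apply: (big_ind2 (fun x y => Gge u x y)); first exact: Gge1.
  by move=> x1 x2 y1 y2 h1 h2; apply: GgeM.
by move=> j _; apply: GgeX.
Qed.

Lemma comp_comp (p : A) (lq lr : N.-tuple A) :
  (p \mPo lq) \mPo lr = p \mPo [tuple (tnth lq i \mPo lr) | i < N].
Proof.
rewrite (comp_mpolyEX p lq) (comp_mpolyEX p) raddf_sum /=; apply: eq_bigr => m _.
rewrite comp_mpolyZ; congr (_ *: _).
rewrite !comp_mpolyX rmorph_prod /=; apply: eq_bigr => i _.
by rewrite rmorphXn tnth_mktuple.
Qed.

End Comp.

Section Fin.
Variables (N : nat) (K : fieldType).
Local Notation A := {mpoly K[N]}.

Definition Lmon (b : nat) : seq 'X_{1..N} := [seq val m | m <- enum {: 'X_{1..N < b}}].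
Definition Lb (b : nat) : seq A := [seq 'X_[m] | m <- Lmon b].

Lemma Lmon_uniq b : uniq (Lmon b).
Proof. by rewrite map_inj_uniq ?enum_uniq //; apply: val_inj. Qed.

Lemma mem_Lmon b m : (mdeg m < b)%N -> m \in Lmon b.
Proof.
move=> h; apply/mapP; exists (BMultinom h) => //.
by rewrite mem_enum.
Qed.

Lemma span_Lb b (p : A) : (forall m, m \in msupp p -> (mdeg m < b)%N) -> inspan (Lb b) p.
Proof.
move=> hp; exists (fun i => p@_(nth 0%MM (Lmon b) i)).
apply/mpolyP => m0; rewrite raddf_sum /=; under eq_bigr do rewrite mcoeffZ.
set G := fun x : 'X_{1..N} => p@_x * (x == m0)%:R.
transitivity (\sum_(i < size (Lmon b)) G (nth 0%MM (Lmon b) i)); last first.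
  have e : size (Lb b) = size (Lmon b) by rewrite size_map.
  rewrite -(big_mkord xpredT (fun i => G (nth 0%MM (Lmon b) i))).
  rewrite -[in RHS](big_mkord xpredT (fun i => p@_(nth 0%MM (Lmon b) i) * ((Lb b)`_i)@_m0)).
  rewrite e big_nat_cond [in RHS]big_nat_cond; apply: eq_bigr => i /andP [/andP [_ hi] _].
  by rewrite /G (nth_map 0%MM) // mcoeffX eq_sym.
have -> : \sum_(i < size (Lmon b)) G (nth 0%MM (Lmon b) i) = \sum_(x <- Lmon b) G x.
  by rewrite (big_nth 0%MM) big_mkord.
rewrite /G.
rewrite (sum_delta xpredT (fun x => p@_x)) ?Lmon_uniq // andbT.
case: (boolP (m0 \in msupp p)) => h.
  by rewrite mem_Lmon ?mul1r // hp.
by rewrite (memN_msupp_eq0 h) mulr0.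
Qed.

End Fin.

Section Part1.
Variables (N : nat) (K : fieldType) (w : 'I_N -> int) (d : nat).
Local Notation A := {mpoly K[N]}.
Variable W : A -> Prop.
Hypothesis hW : is_subspace W.
Hypothesis hWd : forall p, W p -> in_Ad d p.

Local Notation wt := (Defs.mweight w).
Definition le_a (a : int) : A -> Prop := monspan (fun m => wt m <= a).
Definition wpart (a : int) (p : A) : A := wfilter (fun m => wt m == a) p.

Lemma zero_sub : is_subspace (fun v : A => v = 0).
Proof. by split=> [//|u v -> ->|c v ->]; rewrite ?addr0 ?scaler0. Qed.

Lemma Ad_sub : is_subspace (in_Ad (K:=K) (n:=N) d).
Proof. exact: (@monspan_sub N K (fun m => mdeg m = d)). Qed.

Lemma S_sub a : is_subspace (span_S w d a : A -> Prop).
Proof. exact: (@monspan_sub N K). Qed.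

Lemma le_sub a : is_subspace (le_a a).
Proof. exact: (@monspan_sub N K). Qed.

Lemma Ad_span (p : A) : in_Ad d p -> inspan (@Lb N K d.+1) p.
Proof. by move=> h; apply: span_Lb => m /h ->. Qed.

Lemma S1E a (p : A) : span_S w d (a + 1) p <-> in_Ad d p /\ le_a a p.
Proof.
split.
  by move=> h; split=> m /h [] // _; rewrite ltzD1.
by case=> h1 h2 m hm; split; [apply: h1 | rewrite ltzD1; apply: h2].
Qed.

Lemma F4 a (p : A) : in_Ad d p -> le_a a p -> wpart a p = 0 -> span_S w d a p.
Proof.
move=> h1 h2 h3 m hm; split; first exact: h1.
rewrite lt_neqAle h2 // andbT; apply/negP => /eqP e.
move: hm; rewrite mcoeff_msupp.
have := congr1 (mcoeff m) h3; rewrite wfilterE e eqxx mcoeff0 => ->.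
by rewrite eqxx.
Qed.

Lemma F5a a (p : A) : monspan (fun m => wt m = a) (wpart a p).
Proof.
move=> m; rewrite mcoeff_msupp wfilterE.
by case: (wt m =P a) => // _; rewrite eqxx.
Qed.

Lemma F5b a (h : A) : monspan (fun m => wt m = a) h -> wpart a h = h.
Proof.
move=> hh; apply/mpolyP => m; rewrite wfilterE.
case: eqP => // ne; apply/eqP; rewrite eq_sym mcoeff_eq0; apply/negP => /hh.
exact: ne.
Qed.

Lemma F6 a (p : A) : span_S w d a p -> wpart a p = 0.
Proof.
move=> hp; apply/mpolyP => m; rewrite wfilterE mcoeff0.
case: eqP => // e; apply/eqP; rewrite mcoeff_eq0; apply/negP => /hp [_].
by rewrite e ltxx.
Qed.

Lemma F7 a (f : A) : wpart a (init_form w f) =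
  if all (fun m => wt m <= a) (msupp f) then wpart a f else 0.
Proof.
apply/mpolyP => m0.
have -> : init_form w f = wfilter (fun m => all (fun m' => wt m' <= wt m) (msupp f)) f by [].
rewrite wfilterE; case: eqP => e.
  rewrite wfilterE e; case: ifP => _; first by rewrite wfilterE e eqxx.
  by rewrite mcoeff0.
by case: ifP => _; rewrite ?mcoeff0 // wfilterE; case: eqP.
Qed.

Lemma F8 a (f : A) : W f -> le_a a f -> init_space w W (wpart a f).
Proof.
move=> Wf lef.
case: (classic (wpart a f = 0)) => [->|nz].
  exists [::]; split => //; exists (fun _ => 0); by rewrite big_ord0.
have [m1 hm1] : exists m1, (wpart a f)@_m1 != 0.
  apply: NNPP => hn; apply: nz; apply/mpolyP => m; rewrite mcoeff0.
  by apply: NNPP => hne; apply: hn; exists m; apply/eqP.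
move: hm1; rewrite wfilterE; case: (wt m1 =P a) => [e1 hm1|]; last by rewrite eqxx.
have m1s : m1 \in msupp f by rewrite mcoeff_msupp.
have ie : init_form w f = wpart a f.
  apply/mpolyP => m0.
  have -> : init_form w f = wfilter (fun m => all (fun m' => wt m' <= wt m) (msupp f)) f by [].
  rewrite !wfilterE.
  case: (boolP (m0 \in msupp f)) => hm0; last by rewrite (memN_msupp_eq0 hm0); do 2 case: ifP.
  case: ifP => hall; case: eqP => // e0.
    exfalso; apply: e0; apply/eqP; rewrite eq_le lef //=.
    by rewrite -e1; apply: (allP hall).
  by exfalso; move/negP: hall; apply; apply/allP => m' /lef; rewrite e0.
exists [:: init_form w f]; split.
  by move=> g; rewrite mem_seq1 => /eqP ->; exists f.
by exists (fun _ => 1); rewrite big_ord1 scale1r /= ie.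
Qed.

Definition Cset (a : int) : A -> Prop := weight_comp w a (init_space w W).

Lemma charC a (h : A) : Cset a h <-> exists F, [/\ W F, le_a a F & h = wpart a F].
Proof.
split; last first.
  by case=> F [WF leF ->]; split; [apply: F8 | apply: F5a].
case=> [[s [hs [c hc]]] hmon].
have : forall i : 'I_(size s), exists f, W f /\ s`_i = init_form w f.
  by move=> i; apply: hs; apply: mem_nth.
case/fin_all_exists => F hF.
pose c' i := if all (fun m => wt m <= a) (msupp (F i)) then c i else 0.
exists (\sum_i c' i *: F i); split.
- by apply: subQ_lin => // i; case: (hF i).
- apply: (subQ_sum (le_sub a)).
  move=> i _; rewrite /c'; case: ifP => hall; last by rewrite scale0r; exact: (subQ0 (le_sub a)).
  by apply: (subQZ (le_sub a)) => m /(allP hall).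
rewrite -(F5b hmon) hc /wpart !wfilter_sum; apply: eq_bigr => i _.
rewrite !wfilterZ; case: (hF i) => _ ->; rewrite -/(wpart a _) F7 /c'.
by case: ifP => _; rewrite ?scaler0 ?scale0r.
Qed.

End Part1.

Section Part1b.
Variables (N : nat) (K : fieldType) (w : 'I_N -> int) (d : nat).
Local Notation A := {mpoly K[N]}.
Variable W : A -> Prop.
Hypothesis hW : is_subspace W.
Hypothesis hWd : forall p, W p -> in_Ad d p.
Local Notation wt := (Defs.mweight w).

Lemma C_Ad a (h : A) : Cset w W a h -> in_Ad d h.
Proof.
case/(charC w hW) => F [WF _ ->] m; rewrite mcoeff_msupp wfilterE.
case: ifP => _; last by rewrite eqxx.
by rewrite -mcoeff_msupp; apply: hWd.
Qed.

Lemma S_mono a (p : A) : span_S w d a p -> span_S w d (a + 1) p.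
Proof. by move=> h m /h [e1 e2]; split => //; rewrite ltzD1 ltW. Qed.

Lemma part1 a : rkS w d a W = (rkS w d (a + 1) W + dimK (Cset w W a))%N.
Proof.
have [k1 h1] := quotdim_exists (S_sub K w d (a + 1)) (fun v Wv => Ad_span (hWd Wv)).
have [k2 h2] := quotdim_exists (zero_sub N K) (fun v Cv => Ad_span (@C_Ad a v Cv)).
rewrite /rkS /dimK (quotdim_eq (S_sub K w d _) h1) (quotdim_eq (zero_sub N K) h2).
apply: (quotdim_eq (S_sub K w d a)).
case: h1 => t1 [t1W t1ind t1sp]; case: h2 => g [gC gind gsp].
have : forall j, exists F, [/\ W F, le_a w a F & g j = wpart w a F].
  by move=> j; apply/(charC w hW).
case/fin_all_exists => f hf.
pose T i := match split i with inl x => t1 x | inr y => f y end.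
have TL : forall x, T (lshift k2 x) = t1 x.
  by move=> x; have e : split (lshift k2 x) = inl x := unsplitK (inl x); rewrite /T e.
have TR : forall y, T (rshift k1 y) = f y.
  by move=> y; have e : split (rshift k1 y) = inr y := unsplitK (inr y); rewrite /T e.
have fW : forall y, W (f y) by move=> y; case: (hf y).
have fle : forall y, le_a w a (f y) by move=> y; case: (hf y).
have Yfacts : forall e : 'I_k2 -> K,
   [/\ W (\sum_y e y *: f y), le_a w a (\sum_y e y *: f y)
     & wpart w a (\sum_y e y *: f y) = \sum_y e y *: g y].
  move=> e; split.
  - exact: subQ_lin.
  - exact: (subQ_lin (le_sub K w a)).
  rewrite /wpart wfilter_sum; apply: eq_bigr => y _.
  by rewrite wfilterZ; case: (hf y) => _ _ ->.
exists T; split.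
- by move=> i; rewrite /T; case: (split i).
- move=> c; rewrite big_split_ord /=.
  under eq_bigr do rewrite TL.
  under [X in _ + X]eq_bigr do rewrite TR.
  set X := \sum_(i < k1) _; set Y := \sum_(i < k2) _ => hc.
  have [YW Yle Ywp] := Yfacts (fun y => c (rshift k1 y)).
  have YS1 : span_S w d (a + 1) Y by apply/S1E; split => //; apply: hWd.
  have XS1 : span_S w d (a + 1) X.
    have -> : X = (X + Y) - Y by rewrite addrK.
    by apply: (subQB (S_sub K w d _)) => //; apply: S_mono.
  have hl := t1ind _ XS1.
  have X0 : X = 0 by rewrite /X big1 // => i _; rewrite hl scale0r.
  move: hc; rewrite X0 add0r => /(F6 (w := w)); rewrite Ywp => /gind hr i.
  by rewrite -(splitK i); case: (split i) => x /=; [apply: hl | apply: hr].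
move=> v Wv; have [c1 hc1] := t1sp v Wv.
set v' := v - _ in hc1.
have v'W : W v' by apply: (subQB hW) => //; apply: subQ_lin.
have [_ v'le] := (S1E w d _ _).1 hc1.
have Cv' : Cset w W a (wpart w a v') by apply/(charC w hW); exists v'.
have [e he] := gsp _ Cv'.
exists (fun i => match split i with inl x => c1 x | inr y => e y end).
rewrite big_split_ord /=.
have cl : forall x, (match split (lshift k2 x) with inl x => c1 x | inr y => e y end) = c1 x.
  by move=> x; have e' : split (lshift k2 x) = inl x := unsplitK (inl x); rewrite e'.
have cr : forall y, (match split (rshift k1 y) with inl x => c1 x | inr y => e y end) = e y.
  by move=> y; have e' : split (rshift k1 y) = inr y := unsplitK (inr y); rewrite e'.
under eq_bigr do rewrite TL cl.
rewrite (eq_bigr (fun y => e y *: f y)); last by move=> y _; rewrite TR cr.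
rewrite opprD addrA -/v'.
have [YW Yle Ywp] := Yfacts e.
apply: F4.
- by apply: hWd; apply: (subQB hW).
- exact: (subQB (le_sub K w a)).
by rewrite /wpart wfilterB -/(wpart _ _ _) -/(wpart _ _ _) Ywp.
Qed.

End Part1b.

Section Bact.
Variables (N : nat) (K : fieldType).
Local Notation A := {mpoly K[N]}.

Lemma mweightU (u : 'I_N -> int) i : Defs.mweight u U_(i)%MM = u i.
Proof.
rewrite /Defs.mweight (bigD1 i) //= big1 => [|k nki].
  by rewrite mnm1E eqxx mulr1 addr0.
by rewrite mnm1E eq_sym (negbTE nki) mulr0.
Qed.

Lemma GgeXU (u : 'I_N -> int) i : Gge u (u i) ('X_i : A).
Proof. by have := @GgeXm N K u U_(i)%MM; rewrite mweightU. Qed.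

Lemma bact_lin (b : 'M[K]_N) k (c : 'I_k -> K) (t : 'I_k -> A) :
  bact b (\sum_i c i *: t i) = \sum_i c i *: bact b (t i).
Proof. by rewrite /bact linear_sum; apply: eq_bigr => i _; rewrite linearZ. Qed.

Lemma bact0 (b : 'M[K]_N) : bact b 0 = 0.
Proof. exact: comp_mpoly0. Qed.

Lemma bact_inv (b : 'M[K]_N) (p : A) : b \in unitmx -> bact (invmx b) (bact b p) = p.
Proof.
move=> bu; rewrite /bact comp_comp.
set lr := [tuple \sum_(i < N) invmx b i j *: 'X_i | j < N].
set lq := [tuple \sum_(i < N) b i j *: 'X_i | j < N].
have -> : [tuple (tnth lq i \mPo lr) | i < N] = [tuple 'X_i | i < N].
  apply: eq_from_tnth => j; rewrite !tnth_mktuple raddf_sum /=.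
  rewrite (eq_bigr (fun i => \sum_(k < N) (invmx b k i * b i j) *: ('X_k : A))); last first.
    move=> i _; rewrite comp_mpolyZ comp_mpolyXU -tnth_nth tnth_mktuple scaler_sumr.
    by apply: eq_bigr => k _; rewrite scalerA mulrC.
  rewrite exchange_big /=.
  rewrite (eq_bigr (fun k => (invmx b *m b) k j *: ('X_k : A))); last first.
    by move=> k _; rewrite mxE scaler_suml.
  rewrite mulVmx // (bigD1 j) //= big1 => [|k nkj].
    by rewrite mxE eqxx /= scale1r addr0.
  by rewrite mxE (negbTE nkj) /= scale0r.
exact: comp_mpoly_id.
Qed.

Lemma bact_Gge (b : 'M[K]_N) (u v : 'I_N -> int) (a : int) (p : A) :
  (forall m, m \in msupp p -> a <= Defs.mweight v m) ->
  (forall j, Gge u (v j) (\sum_(i < N) b i j *: 'X_i)) ->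
  Gge u a (bact b p).
Proof.
move=> hp hq; apply: (Gge_comp hp) => j.
by rewrite tnth_mktuple.
Qed.

Lemma mweight_cst (c : int) (m : 'X_{1..N}) :
  Defs.mweight (fun _ => c) m = c * (mdeg m)%:Z.
Proof.
rewrite /Defs.mweight mdegE -mulr_sumr; congr (_ * _).
by rewrite (big_morph Posz PoszD erefl).
Qed.

Lemma bact_Ad (b : 'M[K]_N) d (p : A) : in_Ad d p -> in_Ad d (bact b p).
Proof.
move=> hp m hm.
have lin : forall c : int, forall j, Gge (fun _ => c) c (\sum_(i < N) b i j *: ('X_i : A)).
  move=> c j; apply: Gge_sum => i _; apply: GgeZ.
  exact: (GgeXU (fun _ => c)).
have h1 : Gge (fun _ => 1) d%:Z (bact b p).
  apply: (bact_Gge (v := fun _ => 1)) => [m' /hp|]; last exact: lin.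
  by rewrite mweight_cst mul1r => ->.
have h2 : Gge (fun _ => -1) (- d%:Z) (bact b p).
  apply: (bact_Gge (v := fun _ => -1)) => [m' /hp|]; last exact: lin.
  by rewrite mweight_cst mulN1r => ->.
move: (h1 _ hm) (h2 _ hm); rewrite !mweight_cst mul1r mulN1r lerN2 => e1 e2.
by apply/eqP; rewrite -eqz_nat eq_le e1 e2.
Qed.

End Bact.

Section Part2.
Variables (N : nat) (K : fieldType) (w : 'I_N -> int) (d : nat).
Local Notation A := {mpoly K[N]}.
Variable W : A -> Prop.
Hypothesis hW : is_subspace W.
Hypothesis hWd : forall p, W p -> in_Ad d p.
Hypothesis hmono : forall i j : 'I_N, (i <= j)%N -> w j <= w i.
Local Notation wt := (Defs.mweight w).

Definition pige (a : int) (p : A) : A := wfilter (fun m => a <= wt m) p.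

Lemma pige_Gge a p : Gge w a (pige a p).
Proof.
move=> m; rewrite mcoeff_msupp wfilterE.
by case: ifP => // _; rewrite eqxx.
Qed.

Lemma pige_S a p : in_Ad d p -> span_S w d a (p - pige a p).
Proof.
move=> hp m; rewrite mcoeff_msupp mcoeffB wfilterE.
case: ifP => h; first by rewrite subrr eqxx.
rewrite subr0 -mcoeff_msupp => hm; split; first exact: hp.
by rewrite ltNge h.
Qed.

Lemma pige_W a f : w_homog_space w W -> W f -> W (pige a f).
Proof.
move=> hom /hom [s [hs [c ->]]].
rewrite /pige wfilter_sum; apply: (subQ_sum hW) => i _.
rewrite wfilterZ; apply: (subQZ hW).
have [Wg hg] := hs _ (mem_nth 0 (ltn_ord i)).
set g := s`_i in Wg hg *.
case: (boolP (has (fun m => a <= wt m) (msupp g))) => hh.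
  have [m0 m0s am0] := hasP hh.
  have -> : wfilter (fun m => a <= wt m) g = g; last by [].
  apply/mpolyP => m; rewrite wfilterE; case: ifP => // h.
  apply/eqP; rewrite eq_sym mcoeff_eq0; apply/negP => ms.
  by move: h; rewrite (hg m m0 ms m0s) am0.
have -> : wfilter (fun m => a <= wt m) g = 0; last exact: (subQ0 hW).
apply/mpolyP => m; rewrite wfilterE mcoeff0; case: ifP => // h.
apply/eqP; rewrite mcoeff_eq0; apply/negP => ms.
by move/negP: hh; apply; apply/hasP; exists m.
Qed.

Lemma bW_Ad (b : 'M[K]_N) p : bimage b W p -> in_Ad d p.
Proof. by case=> q [Wq ->]; apply: bact_Ad; apply: hWd. Qed.

Lemma part2 (b : 'M[K]_N) a : w_homog_space w W -> borel b ->
  (rkS w d a W <= rkS w d a (bimage b W))%N.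
Proof.
move=> hom [bu btri].
have [k1 h1] := quotdim_exists (S_sub K w d a) (fun v Wv => Ad_span (hWd Wv)).
have [k2 h2] := quotdim_exists (S_sub K w d a) (P := bimage b W) (fun v Bv => Ad_span (bW_Ad Bv)).
rewrite /rkS (quotdim_eq (S_sub K w d a) h1) (quotdim_eq (S_sub K w d a) h2).
case: h1 => t [tW tind _]; case: h2 => u [_ _ usp].
pose t' i := pige a (t i).
pose s i := bact b (t' i).
have sB : forall i, bimage b W (s i).
  by move=> i; exists (t' i); split => //; apply: pige_W.
have : forall i, exists c : 'I_k2 -> K, span_S w d a (s i - \sum_j c j *: u j).
  by move=> i; apply: usp.
case/fin_all_exists => C hC.
apply: (@indep_le _ _ _ (S_sub K w d a) _ _ s u (\matrix_(i, j) C i j)).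
  by move=> i; under eq_bigr do rewrite mxE; exact: hC.
move=> c hc.
have lin : forall j, Gge w (w j) (\sum_(i < N) b i j *: ('X_i : A)).
  move=> j; apply: Gge_sum => i _.
  case: (leqP i j) => hij.
    by apply: GgeZ; apply: (Gge_le (hmono hij)); apply: GgeXU.
  by rewrite btri // scale0r; apply: Gge0.
set f := \sum_i c i *: t' i.
have fG : Gge w a f.
  by apply: Gge_sum => i _; apply: GgeZ; apply: pige_Gge.
have bfG : Gge w a (bact b f) by apply: (bact_Gge (v := w)) => // m /fG.
have bf0 : bact b f = 0.
  move: hc; rewrite /s -bact_lin -/f => hc.
  apply/mpolyP => m; rewrite mcoeff0; apply/eqP; rewrite mcoeff_eq0.
  apply/negP => ms; have := bfG _ ms; have [_ ] := hc _ ms.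
  by rewrite ltNge => /negP.
have f0 : f = 0 by rewrite -(bact_inv f bu) bf0 bact0.
apply: tind.
have -> : \sum_i c i *: t i = f + \sum_i c i *: (t i - t' i).
  by rewrite -big_split /=; apply: eq_bigr => i _; rewrite -scalerDr addrC subrK.
rewrite f0 add0r; apply: (subQ_lin (S_sub K w d a)) => i.
by apply: pige_S; apply: hWd.
Qed.

End Part2.

(* variables X_1..X_n are 'X_i for i : 'I_n ; X_1 is index ord0 *)
Theorem proposition3p1 (K : fieldType) (n : nat) (d : nat)
    (W : {mpoly K[n.+1]} -> Prop) (w : 'I_n.+1 -> int) :
  (0 < d)%N ->
  is_subspace W -> (forall p, W p -> in_Ad d p) ->
  (forall i j : 'I_n.+1, (i <= j)%N -> w j <= w i) ->
  (forall i, 0 <= w i) ->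
  (forall a : int, 0 <= a <= w ord0 * d%:Z ->
     (dimK (weight_comp w a (init_space w W)))%:Z
       = (rkS w d a W)%:Z - (rkS w d (a + 1) W)%:Z)
  /\
  (w_homog_space w W -> forall b : 'M[K]_n.+1, borel b ->
     forall a : int, 1 <= a <= w ord0 * d%:Z ->
       (rkS w d a W <= rkS w d a (bimage b W))%N).
Proof.
move=> dpos hW hWd hmono hpos; split.
  move=> a _; rewrite (@part1 _ _ w d W hW hWd a) PoszD addrAC subrr add0r //.
by move=> hom b hb a _; apply: part2.
Qed.
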